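(* Let $\mathbb F$ be an infinite field, $\mathbf z=(z_1,\dots,z_m)$ indeterminates, and $L(\mathbf z)\in\mathrm{Ten}_{\mathbb F[\mathbf z]}(n,d)$ a tensor whose entries are polynomials in $\mathbf z$. If $\mathrm{brk}_{\mathbb F}(L(\boldsymbol\beta))\le r$ for all $\boldsymbol\beta\in\mathbb F^m$, then $\mathrm{brk}_{\mathbb F(\mathbf z)}(L(\mathbf z))\le r$ and $\mathrm{brk}_{\overline{\mathbb F(\mathbf z)}}(L(\mathbf z))\le r$.
   Context: For a field $\mathbb L$, $I_{\mathbb L,r}$ is the ideal of polynomials on $\mathrm{Ten}_{\mathbb L}(n,d)=(\mathbb L^n)^{\otimes d}$ vanishing on all tensors of tensor rank $\le r$, and $\mathrm{brk}_{\mathbb L}(T)\le r$ means every polynomial in $I_{\mathbb L,r}$ vanishes at $T$ (i.e., $T$ lies in the Zariski closure of the tensors of rank $\le r$). Tensor rank is the least number of tensors $\mathbf v_1\otimes\cdots\otimes\mathbf v_d$ summing to the tensor. *)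

(* Defs.v *)
From HB Require Import structures.
From mathcomp Require Import all_boot all_order all_algebra.
Set Implicit Arguments. Unset Strict Implicit. Unset Printing Implicit Defensive.
Import Order.TTheory GRing.Theory Num.Theory.
Local Open Scope ring_scope.

Inductive pexpr (R V : Type) :=
| PConst of R
| PVar of V
| PAdd of pexpr R V & pexpr R V
| PMul of pexpr R V & pexpr R V
| POpp of pexpr R V.

Fixpoint peval (R V : Type) (S : comNzRingType) (f : R -> S) (a : V -> S)
    (e : pexpr R V) : S :=
  match e with
  | PConst c => f c
  | PVar v => a v
  | PAdd e1 e2 => peval f a e1 + peval f a e2
  | PMul e1 e2 => peval f a e1 * peval f a e2
  | POpp e1 => - peval f a e1
  end.

(* Index set of Ten(n,d) = (L^n)^{(x) d}: multi-indices (i_1,...,i_d). *)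
Definition tidx (n d : nat) := {ffun 'I_d -> 'I_n}.

Definition tensor (L : Type) (n d : nat) := tidx n d -> L.

Definition trank_le (L : fieldType) (n d r : nat) (T : tensor L n d) : Prop :=
  exists v : 'I_r -> 'I_d -> 'I_n -> L,
    forall i : tidx n d, T i = \sum_(s < r) \prod_(k < d) v s k (i k).

Definition brk_le (L : fieldType) (n d r : nat) (T : tensor L n d) : Prop :=
  forall p : pexpr L (tidx n d),
    (forall U : tensor L n d, trank_le r U -> peval id U p = 0) ->
    peval id T p = 0.

(* Rational function field F(z_1,...,z_m) := F(z_1)...(z_m) (iterated). *)
Fixpoint ratfun (F : fieldType) (m : nat) : fieldType :=
  match m with
  | 0 => F
  | m'.+1 => ({fraction {poly ratfun F m'}} : fieldType)
  end.

Fixpoint rf_const (F : fieldType) (m : nat) : F -> ratfun F m :=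
  match m return F -> ratfun F m with
  | 0 => fun c => c
  | m'.+1 => fun c => @FracField.tofrac _ ((rf_const m' c)%:P)
  end.

(* The indeterminate z_i (i < m, 0-based) in F(z). *)
Fixpoint rf_var (F : fieldType) (m : nat) : nat -> ratfun F m :=
  match m return nat -> ratfun F m with
  | 0 => fun _ => 0
  | m'.+1 => fun i =>
      if i == m' then @FracField.tofrac _ 'X
      else @FracField.tofrac _ ((rf_var F m' i)%:P)
  end.

Definition algebraic_over (k K : fieldType) (f : {rmorphism k -> K}) (x : K) :=
  exists2 p : {poly k}, p != 0 & root (map_poly f p) x.

Definition infinite_field (F : fieldType) := forall s : seq F, exists x : F, x \notin s.

(* Main.v *)
Require Import Defs.
From HB Require Import structures.
From mathcomp Require Import all_boot all_order all_algebra.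
From Stdlib Require Import Classical.
Import GRing.Theory.
Local Open Scope ring_scope.
Set Implicit Arguments. Unset Strict Implicit.

Lemma peval_ext (R V : Type) (S : comNzRingType) (f1 f2 : R -> S) (a1 a2 : V -> S) e :
  f1 =1 f2 -> a1 =1 a2 -> peval f1 a1 e = peval f2 a2 e.
Proof.
move=> hf ha; elim: e => /= [c|v|e1 -> e2 ->|e1 -> e2 ->|e1 ->] //.
Qed.

Lemma peval_morph (R V : Type) (S S' : comNzRingType) (h : {rmorphism S -> S'})
  (f : R -> S) (a : V -> S) e :
  h (peval f a e) = peval (h \o f) (h \o a) e.
Proof.
elim: e => /= [c|v|e1 IH1 e2 IH2|e1 IH1 e2 IH2|e1 IH1] //.
- by rewrite rmorphD IH1 IH2.
- by rewrite rmorphM IH1 IH2.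
- by rewrite rmorphN IH1.
Qed.

Fixpoint psubst (R V W : Type) (s : V -> pexpr R W) (e : pexpr R V) : pexpr R W :=
  match e with
  | PConst c => @PConst R W c
  | PVar v => s v
  | PAdd e1 e2 => PAdd (psubst s e1) (psubst s e2)
  | PMul e1 e2 => PMul (psubst s e1) (psubst s e2)
  | POpp e1 => POpp (psubst s e1)
  end.

Lemma peval_subst (R V W : Type) (S : comNzRingType) (f : R -> S) (a : W -> S)
  (s : V -> pexpr R W) e :
  peval f a (psubst s e) = peval f (fun v => peval f a (s v)) e.
Proof.
elim: e => /= [c|v|e1 IH1 e2 IH2|e1 IH1 e2 IH2|e1 IH1] //.
- by rewrite IH1 IH2.
- by rewrite IH1 IH2.
- by rewrite IH1.
Qed.

Definition qsum (R V : Type) (z : R) (q : nat) (f : 'I_q -> pexpr R V) : pexpr R V :=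
  foldr (fun j acc => PAdd (f j) acc) (@PConst R V z) (index_enum 'I_q).

Lemma peval_qsum (R V : Type) (S : comNzRingType) (f0 : R -> S) (a : V -> S)
  (z : R) q (f : 'I_q -> pexpr R V) :
  f0 z = 0 -> peval f0 a (qsum z f) = \sum_(j < q) peval f0 a (f j).
Proof.
move=> hz; rewrite /qsum; elim: (index_enum 'I_q) => [|j s IH] /=.
  by rewrite big_nil.
by rewrite big_cons IH.
Qed.

Lemma uniq_seq (F : fieldType) : infinite_field F ->
  forall k, exists s : seq F, uniq s /\ size s = k.
Proof.
move=> hinf; elim=> [|k [s [us ss]]]; first by exists [::].
have [x hx] := hinf s; exists (x :: s) => /=; by rewrite hx us ss.
Qed.

Lemma poly_inf_zero (F : fieldType) (R : idomainType) (g : F -> R) :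
  injective g -> infinite_field F ->
  forall q : {poly R}, (forall y, q.[g y] = 0) -> q = 0.
Proof.
move=> ginj hinf q hq; apply/eqP; apply/negPn/negP => nz.
have [s [us ss]] := uniq_seq hinf (size q).
have hall : all (root q) [seq g i | i <- s].
  apply/allP => x /mapP [y _ ->]; apply/rootP; exact: hq.
have := max_poly_roots nz hall.
by rewrite map_inj_uniq // us size_map ss ltnn => /(_ isT).
Qed.

Section Transfer.
Variables (F K : fieldType) (g : {rmorphism F -> K}) (W : finType).
Hypothesis hinf : infinite_field F.

Lemma transfer_aux (e : pexpr F W) : (forall a : W -> F, peval id a e = 0) ->
  forall (xs : seq W) (a0 : W -> F) (a : W -> K),
  (forall w, w \notin xs -> a w = g (a0 w)) -> peval g a e = 0.
Proof.
move=> he; elim=> [|x xs IH] a0 a ha.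
  have -> : peval g a e = peval (g \o id) (g \o a0) e.
    by apply: peval_ext => // w; apply: ha.
  by rewrite -peval_morph he rmorph0.
pose P := peval (fun c => (g c)%:P) (fun w => if w == x then 'X else (a w)%:P) e.
have hP : forall z, P.[z] = peval g (fun w => if w == x then z else a w) e.
  move=> z; rewrite /P -horner_evalE peval_morph; apply: peval_ext => [c|w] /=.
    by rewrite horner_evalE hornerC.
  by rewrite horner_evalE; case: eqP => _; rewrite ?hornerX ?hornerC.
have P0 : P = 0.
  apply: (poly_inf_zero (fmorph_inj g) hinf) => y; rewrite hP.
  apply: (IH (fun w => if w == x then y else a0 w)) => w hw.
  case: eqP => // hwx; apply: ha.
  by rewrite in_cons negb_or hw andbT; apply/eqP.
have := hP (a x); rewrite P0 horner0 => ->.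
by apply: peval_ext => // w; case: eqP => [->|].
Qed.

Lemma transfer (e : pexpr F W) : (forall a : W -> F, peval id a e = 0) ->
  forall (a : W -> K), peval g a e = 0.
Proof.
move=> he a; apply: (transfer_aux he (xs := enum W) (a0 := fun _ => 0)).
by move=> w; rewrite mem_enum.
Qed.
End Transfer.

Section NF.
Variables (F K : fieldType) (g : {rmorphism F -> K}) (V : Type).

Fixpoint nf (e : pexpr K V) : seq (K * pexpr F V) :=
  match e with
  | PConst c => [:: (c, @PConst F V 1)]
  | PVar v => [:: (1, @PVar F V v)]
  | PAdd e1 e2 => nf e1 ++ nf e2
  | PMul e1 e2 => [seq (x.1.1 * x.2.1, PMul x.1.2 x.2.2) |
                    x <- [seq (a, b) | a <- nf e1, b <- nf e2]]
  | POpp e1 => [seq (- x.1, x.2) | x <- nf e1]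
  end.

Lemma nfE e (a : V -> K) : peval id a e = \sum_(x <- nf e) x.1 * peval g a x.2.
Proof.
elim: e => /= [c|v|e1 IH1 e2 IH2|e1 IH1 e2 IH2|e1 IH1].
- by rewrite big_seq1 /= rmorph1 mulr1.
- by rewrite big_seq1 /= mul1r.
- by rewrite big_cat IH1 IH2.
- rewrite big_map big_allpairs IH1 IH2 mulr_suml; apply: eq_bigr => x _.
  rewrite mulr_sumr; apply: eq_bigr => y _ /=; by rewrite mulrACA.
- rewrite big_map IH1 -sumrN; apply: eq_bigr => x _; by rewrite mulNr.
Qed.
End NF.

Definition phi (R : fieldType) (n d r : nat) (v : 'I_r -> 'I_d -> 'I_n -> R) :
  tensor R n d := fun i => \sum_(s < r) \prod_(k < d) v s k (i k).

Lemma brk_le_ext (K : fieldType) n d r (T1 T2 : tensor K n d) :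
  T1 =1 T2 -> brk_le r T1 -> brk_le r T2.
Proof.
move=> h hb p hp; rewrite -(hb p hp); exact: peval_ext.
Qed.

Section Main.
Variables (F K : fieldType) (g : {rmorphism F -> K}) (m n d r : nat)
  (L : tidx n d -> pexpr F 'I_m).
Hypothesis hinf : infinite_field F.
Hypothesis hL : forall beta : 'I_m -> F, brk_le r (fun i => peval id beta (L i)).
Variable p : pexpr K (tidx n d).
Hypothesis hp : forall U : tensor K n d, trank_le r U -> peval id U p = 0.

Let ts := @nf F K _ p.
Let k := size ts.
Let x0 : K * pexpr F (tidx n d) := (0, @PConst F _ 0).
Let tj (j : 'I_k) := (nth x0 ts j).2.
Let cj (j : 'I_k) := (nth x0 ts j).1.
Let dflt : 'I_r -> 'I_d -> 'I_n -> F := fun _ _ _ => 0.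

Definition ev q (B : 'M[F]_(q, k)) i (v0 : 'I_r -> 'I_d -> 'I_n -> F) :=
  \sum_(j < k) B i j * peval id (phi v0) (tj j).

Definition Umx (S : seq ('I_r -> 'I_d -> 'I_n -> F)) : 'M[F]_(k, size S) :=
  \matrix_(j, s) peval id (phi (nth dflt S s)) (tj j).

Lemma mulU0 q (B : 'M[F]_(q, k)) S :
  B *m Umx S = 0 <-> forall i s, (s < size S)%N -> ev B i (nth dflt S s) = 0.
Proof.
split => [h i s hs | h].
  have := congr1 (fun M : 'M[F]_(q, size S) => M i (Ordinal hs)) h; rewrite !mxE => <-.
  by apply: eq_bigr => j _; rewrite mxE.
apply/matrixP => i s; rewrite !mxE.
transitivity (ev B i (nth dflt S s)); last exact: h.
by rewrite /ev; apply: eq_bigr => j _; rewrite mxE.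
Qed.

Definition good S := forall b : 'rV[F]_k, b *m Umx S = 0 -> forall v0, ev b 0 v0 = 0.

Lemma not_good S : ~ good S ->
  exists v0, (\rank (kermx (Umx (v0 :: S))) < \rank (kermx (Umx S)))%N.
Proof.
move=> ng.
have [b [bU [v0 hv0]]] : exists b : 'rV_k, b *m Umx S = 0 /\ exists v0, ev b 0 v0 <> 0.
  apply: NNPP => H; apply: ng => b bU v0; apply: NNPP => hv; apply: H.
  by exists b; split => //; exists v0.
exists v0; apply: rank_ltmx; rewrite ltmxE; apply/andP; split.
  apply/sub_kermxP; apply/mulU0 => i s hs.
  have /mulU0 H := mulmx_ker (Umx (v0 :: S)).
  exact: (H i s.+1 hs).
apply/negP => sub.
have : (b <= kermx (Umx (v0 :: S)))%MS.
  apply: submx_trans sub; exact/sub_kermxP.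
move/sub_kermxP/mulU0 => H; apply: hv0; exact: (H 0 0%N erefl).
Qed.

Lemma good_ex : exists S, good S.
Proof.
suff H : forall N S, (\rank (kermx (Umx S)) <= N)%N -> exists S', good S'.
  exact: (H k [::] (rank_leq_row _)).
elim=> [|N IH] S hS; (case: (classic (good S)) => [gS|ngS]; [by exists S|]);
  have [v0 lt] := not_good ngS.
  by move: (leq_trans lt hS).
by apply: (IH (v0 :: S)); rewrite -ltnS (leq_trans lt hS).
Qed.

Lemma sum_ts (T : tensor K n d) :
  peval id T p = \sum_(j < k) cj j * peval g T (tj j).
Proof. by rewrite (nfE g) (big_nth x0) big_mkord. Qed.

Variable gam : 'I_m -> K.

Lemma main_brk : peval id (fun i => peval g gam (L i)) p = 0.
Proof.
have [S gS] := good_ex.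
pose c : 'rV[K]_k := \row_j cj j.
have cU : c *m map_mx g (Umx S) = 0.
  apply/matrixP => i s; rewrite !mxE.
  pose v0 := nth dflt S s.
  pose gv := fun a b e => g (v0 a b e).
  transitivity (peval id (phi gv) p); last by apply: hp; exists gv.
  rewrite sum_ts; apply: eq_bigr => j _; rewrite !mxE; congr (_ * _).
  rewrite peval_morph; apply: peval_ext => // t /=.
  by rewrite /phi rmorph_sum; apply: eq_bigr => a _; rewrite rmorph_prod.
have : (c <= kermx (map_mx g (Umx S)))%MS by apply/sub_kermxP.
rewrite -map_kermx => /submxP [x hx].
set B := kermx (Umx S) in hx.
have hB : forall i v0, ev B i v0 = 0.
  move=> i v0.
  have H : row i B *m Umx S = 0 by rewrite -row_mul mulmx_ker row0.
  rewrite -(gS _ H v0) /ev; by apply: eq_bigr => j _; rewrite [in RHS]mxE.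
pose Q i := qsum 0 (fun j => PMul (@PConst F _ (B i j)) (tj j)).
have hQ : forall i beta, peval id (fun t => peval id beta (L t)) (Q i) = 0.
  move=> i beta; apply: (hL beta) => T [v hv].
  rewrite /Q peval_qsum //; transitivity (ev B i v); last exact: hB.
  apply: eq_bigr => j _ /=; congr (_ * _).
  by apply: peval_ext => // t; rewrite hv.
have hQK : forall i, peval g (fun t => peval g gam (L t)) (Q i) = 0.
  move=> i; have := transfer g hinf (e := psubst L (Q i)) _ gam.
  rewrite peval_subst; apply => a; rewrite peval_subst; exact: hQ.
rewrite sum_ts.
transitivity (\sum_(j < k) c 0 j * peval g (fun t => peval g gam (L t)) (tj j)).
  by apply: eq_bigr => j _; rewrite mxE.
rewrite hx; under eq_bigr do rewrite mxE big_distrl /=.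
rewrite exchange_big /=; apply: big1 => i _.
transitivity (x 0 i * peval g (fun t => peval g gam (L t)) (Q i)); last by rewrite hQK mulr0.
rewrite /Q peval_qsum ?rmorph0 // mulr_sumr.
by apply: eq_bigr => j _ /=; rewrite mxE /= mulrA.
Qed.
End Main.

Lemma main (F K : fieldType) (g : {rmorphism F -> K}) (m n d r : nat)
  (L : tidx n d -> pexpr F 'I_m) :
  infinite_field F ->
  (forall beta : 'I_m -> F, brk_le r (fun i => peval id beta (L i))) ->
  forall gam : 'I_m -> K, brk_le r (fun i => peval g gam (L i)).
Proof. move=> hinf hL gam q hq; exact: main_brk. Qed.

Lemma rf_const_zmod (F : fieldType) m : zmod_morphism (@rf_const F m).
Proof. elim: m => [|m IH] x y //=; by rewrite IH polyCB rmorphB. Qed.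

Lemma rf_const_monoid (F : fieldType) m : monoid_morphism (@rf_const F m).
Proof.
split.
  by elim: m => [|m IH] //=; rewrite IH polyC1 rmorph1.
by elim: m => [|m IH] x y //=; rewrite IH polyCM rmorphM.
Qed.

HB.instance Definition _ (F : fieldType) (m : nat) :=
  GRing.isZmodMorphism.Build F (ratfun F m) (@rf_const F m) (@rf_const_zmod F m).
HB.instance Definition _ (F : fieldType) (m : nat) :=
  GRing.isMonoidMorphism.Build F (ratfun F m) (@rf_const F m) (@rf_const_monoid F m).

Theorem corollaryA2 (F : fieldType) (m n d r : nat)
  (L : tidx n d -> pexpr F 'I_m) :
  infinite_field F ->
  (forall beta : 'I_m -> F, brk_le r (fun i => peval id beta (L i))) ->
  brk_le r (fun i => peval (@rf_const F m) (fun j : 'I_m => rf_var F m j) (L i))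
  /\
  (forall (K : closedFieldType) (f : {rmorphism ratfun F m -> K}),
     (forall x : K, algebraic_over f x) ->
     brk_le r (fun i => f (peval (@rf_const F m) (fun j : 'I_m => rf_var F m j) (L i)))).
Proof.
move=> hinf hL; split.
  exact: (main (@rf_const F m : {rmorphism F -> ratfun F m}) hinf hL).
move=> K f _.
apply: (brk_le_ext _ (main (f \o (@rf_const F m : {rmorphism F -> ratfun F m})) hinf hL
          (f \o (fun j : 'I_m => rf_var F m j)))).
by move=> i; rewrite peval_morph.
Qed.
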